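(* Let $P$ be a finite poset, $n\in\mathbb Z$ and $\xi\in\mathbb Z^{P^-}$. Then $T^\xi\in\omega^{(n)}$ if and only if $\xi\in S^{(n)}$. In particular $\omega^{(n)}=\bigoplus_{\xi\in S^{(n)}}\mathbb K T^\xi$.
   Context: $P^-=P\cup\{-\infty\}$ with $-\infty<z$ for all $z\in P$. For a function $\xi$ and finite $B$ in its domain, $\xi^+(B)=\sum_{b\in B}\xi(b)$. $\mathcal C(P)=\{f\in\mathbb R^P: f\ge0,\ f^+(C)\le1$ for every chain $C\}$ (chain polytope). For $f\in\mathbb Z^{P^-}$, $T^f=\prod_{x\in P^-}T_x^{f(x)}$ (Laurent monomial in indeterminates $T_x$), $\deg T^f=f(-\infty)$. For $n\in\mathbb Z$, $S^{(n)}=\{\xi\in\mathbb Z^{P^-}:\xi(x)\ge n\ \forall x\in P,\ \xi(-\infty)\ge\xi^+(C)+n$ for every maximal chain $C$ of $P\}$. $R=\mathbb K[\mathcal C(P)]=\bigoplus_{\xi\in S^{(0)}}\mathbb K T^\xi$ is the Ehrhart ring of $\mathcal C(P)$ over a field $\mathbb K$ and $\omega=\bigoplus_{\xi\in S^{(1)}}\mathbb KT^\xi$ its canonical ideal. $\omega^{(n)}$ is the $n$-th power of $\omega$ in the group of divisorial fractional ideals of $R$ (product $I\cdot J=R:_{Q(R)}(R:_{Q(R)}IJ)$); $\omega^{(0)}=R$, $\omega^{(-1)}=R:_{Q(R)}\omega$. *)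

(* Defs.v *)
From HB Require Import structures.
From Stdlib Require List.
From mathcomp Require Import all_boot all_order all_algebra.
Set Implicit Arguments. Unset Strict Implicit. Unset Printing Implicit Defensive.
Import Order.TTheory GRing.Theory Num.Theory.
Local Open Scope ring_scope.

Section Defs.
Variable K : fieldType.

(* Polynomial ring over K in m variables, built as iterated univariate
   polynomials: mpoly 0 = K, mpoly (k+1) = (mpoly k)[X]. *)
Fixpoint mpoly (m : nat) : idomainType :=
  match m with
  | 0 => K
  | k.+1 => {poly (mpoly k)}
  end.

Fixpoint mvar (m : nat) (i : nat) : mpoly m :=
  match m return mpoly m with
  | 0 => 1
  | k.+1 => match i with
            | 0 => ('X : {poly (mpoly k)})
            | j.+1 => ((mvar k j)%:P : {poly (mpoly k)})
            end
  end.

Fixpoint mconst (m : nat) (c : K) : mpoly m :=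
  match m return mpoly m with
  | 0 => c
  | k.+1 => ((mconst k c)%:P : {poly (mpoly k)})
  end.

(* The ambient field K(T_x : x in P^-) : fraction field of the polynomial ring. *)
Definition ratfield (m : nat) : fieldType := {fraction (mpoly m)}.

End Defs.

Section Poset.
Variables (d : Order.disp_t) (P : finPOrderType d) (K : fieldType).

(* P^- = option P, with None playing the role of -infinity. *)
Definition nvars : nat := #|{: option P}|.
Definition Fld : fieldType := ratfield K nvars.

Definition Tvar (x : option P) : Fld := @FracField.tofrac (mpoly K nvars) (@mvar K nvars (enum_rank x)).
Definition Kc (c : K) : Fld := @FracField.tofrac (mpoly K nvars) (@mconst K nvars c).

Definition Tmon (f : option P -> int) : Fld := \prod_(x : option P) Tvar x ^ f x.

Definition is_chain (C : {set P}) : Prop :=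
  forall x y, x \in C -> y \in C -> ((x <= y)%O || (y <= x)%O).
Definition is_maximal_chain (C : {set P}) : Prop :=
  is_chain C /\ forall D : {set P}, is_chain D -> C \subset D -> D = C.

Definition Sn (n : int) (xi : option P -> int) : Prop :=
  (forall x : P, n <= xi (Some x)) /\
  (forall C : {set P}, is_maximal_chain C ->
     (\sum_(b in C) xi (Some b)) + n <= xi None).

Definition monspan (S : (option P -> int) -> Prop) (q : Fld) : Prop :=
  exists s : seq (K * (option P -> int)),
    List.Forall (fun p => S p.2) s /\ q = \sum_(p <- s) Kc p.1 * Tmon p.2.

(* R = K[C(P)] and its canonical ideal omega, as subsets of the field *)
Definition Rring (q : Fld) : Prop := monspan (Sn 0) q.
Definition omega (q : Fld) : Prop := monspan (Sn 1) q.

Definition QR (q : Fld) : Prop :=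
  exists a b, Rring a /\ Rring b /\ b != 0 /\ q = a / b.

Definition colon (I : Fld -> Prop) (q : Fld) : Prop :=
  QR q /\ forall a, I a -> Rring (q * a).

Definition ideal_prod (I J : Fld -> Prop) (q : Fld) : Prop :=
  exists s : seq (Fld * Fld),
    List.Forall (fun p => I p.1 /\ J p.2) s /\ q = \sum_(p <- s) p.1 * p.2.

(* product in the group of divisorial fractional ideals *)
Definition div_prod (I J : Fld -> Prop) : Fld -> Prop :=
  colon (colon (ideal_prod I J)).

Definition omega_inv : Fld -> Prop := colon omega.

Fixpoint omega_npow (k : nat) : Fld -> Prop :=
  match k with
  | 0 => Rring
  | k.+1 => div_prod omega (omega_npow k)
  end.
Fixpoint omega_inv_npow (k : nat) : Fld -> Prop :=
  match k with
  | 0 => Rring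
  | k.+1 => div_prod omega_inv (omega_inv_npow k)
  end.
Definition omega_pow (n : int) : Fld -> Prop :=
  match n with
  | Posz k => omega_npow k
  | Negz k => omega_inv_npow k.+1
  end.

End Poset.

(* Main.v *)
Require Import Defs.
From Stdlib Require Import FunctionalExtensionality.
From HB Require Import structures.
From mathcomp Require Import all_boot all_order all_algebra zify.
Set Implicit Arguments. Unset Strict Implicit. Unset Printing Implicit Defensive.
Import Order.TTheory GRing.Theory Num.Theory.
Local Open Scope ring_scope.

Section Poly.
Variable K : fieldType.

Lemma mconstD m (a b : K) : mconst m (a + b) = mconst m a + mconst m b.
Proof. elim: m => [|m IH] //=; by rewrite IH polyCD. Qed.
Lemma mconstM m (a b : K) : mconst m (a * b) = mconst m a * mconst m b.
Proof. elim: m => [|m IH] //=; by rewrite IH polyCM. Qed.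
Lemma mconst1 m : mconst m (1 : K) = 1.
Proof. elim: m => [|m IH] //=; by rewrite IH. Qed.
Lemma mconst0 m : mconst m (0 : K) = 0.
Proof. elim: m => [|m IH] //=; by rewrite IH. Qed.
Lemma mconstN m (a : K) : mconst m (- a) = - mconst m a.
Proof. elim: m => [|m IH] //=; by rewrite IH polyCN. Qed.
Lemma mvar_neq0 m i : mvar K m i != 0.
Proof.
elim: m i => [|m IH] [|i] /=; rewrite ?oner_eq0 ?polyXn_eq0 ?polyC_eq0 ?polyX_eq0 //.
Qed.

Definition mm m (e : nat -> nat) : mpoly K m := \prod_(i < m) mvar K m i ^+ e i.

Lemma mmS m e : mm m.+1 e = 'X^(e 0%N) * (mm m (fun i => e i.+1))%:P.
Proof.
rewrite /mm big_ord_recl /= rmorph_prod; congr (_ * _).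
by apply: eq_bigr => i _; rewrite rmorphXn.
Qed.

Definition agree m (e e' : nat -> nat) := [forall i : 'I_m, e i == e' i].

Lemma agreeS m e e0 : agree m.+1 e e0 =
  (e 0%N == e0 0%N) && agree m (fun i => e i.+1) (fun i => e0 i.+1).
Proof.
apply/forallP/andP => [H|[H0 /forallP H] i].
  split; first exact: (H ord0).
  by apply/forallP => i; exact: (H (lift ord0 i)).
case: i => [[|i] Hi] //=. exact: (H (Ordinal (Hi : i < m)%N)).
Qed.

Lemma poly_indep m (s : seq (K * (nat -> nat))) :
  \sum_(p <- s) mconst m p.1 * mm m p.2 = 0 ->
  forall e0, \sum_(p <- s | agree m p.2 e0) p.1 = 0.
Proof.
elim: m s => [|m IH] s Hs e0.
  rewrite -[RHS]Hs; apply: eq_big => [p|p _]; first by apply/forallP => -[].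
  by rewrite /mm big_ord0 mulr1.
set s' := [seq (p.1, fun i => p.2 i.+1) | p <- s & p.2 0%N == e0 0%N].
have H' : \sum_(p <- s') mconst m p.1 * mm m p.2 = 0.
  suff -> : \sum_(p <- s') mconst m p.1 * mm m p.2 =
     (\sum_(p <- s) mconst m.+1 p.1 * mm m.+1 p.2)`_(e0 0%N) by rewrite Hs coef0.
  rewrite coef_sum /s' big_map big_filter big_mkcond /=.
  apply: eq_bigr => p _.
  rewrite mmS mulrCA -polyCM coefXnM coefC.
  case: eqP => [->|ne]; first by rewrite ltnn subnn.
  case: ifP => //; rewrite ltnNge => /negbFE le.
  case: ifP => //; rewrite subn_eq0 => le'. exfalso; apply: ne; apply/eqP; by rewrite eqn_leq le le'.
have := IH _ H' (fun i => e0 i.+1).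
rewrite /s' big_map /= big_filter_cond => H; apply: eq_trans H.
by apply: eq_bigl => p; rewrite agreeS.
Qed.
End Poly.

Section Laurent.
Variables (d : Order.disp_t) (P : finPOrderType d) (K : fieldType).
Local Notation E := (option P -> int).
Local Notation F := (Fld P K).
Local Notation m := (nvars P).
Local Notation mspan := (@monspan d P K).

Definition addE (a b : E) : E := fun x => a x + b x.
Definition eqE (a b : E) := [forall x, a x == b x].
Definition coefL (s : seq (K * E)) (e : E) : K := \sum_(p <- s | eqE p.2 e) p.1.
Definition lsum (s : seq (K * E)) : F := \sum_(p <- s) Kc P p.1 * Tmon K p.2.

Lemma eqE_eq a b : eqE a b -> a = b.
Proof. move/forallP => H; apply: functional_extensionality => x; exact/eqP. Qed.

Lemma KcD (a b : K) : Kc P (a + b) = Kc P a + Kc P b.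
Proof. by rewrite /Kc mconstD rmorphD. Qed.
Lemma KcM (a b : K) : Kc P (a * b) = Kc P a * Kc P b.
Proof. by rewrite /Kc mconstM rmorphM. Qed.
Lemma KcN (a : K) : Kc P (- a) = - Kc P a.
Proof. by rewrite /Kc mconstN rmorphN. Qed.
Lemma Kc1 : Kc P (1 : K) = 1.
Proof. by rewrite /Kc mconst1 rmorph1. Qed.
Lemma Kc0 : Kc P (0 : K) = 0.
Proof. by rewrite /Kc mconst0 rmorph0. Qed.

Lemma Tvar_neq0 (x : option P) : Tvar K x != 0.
Proof. by rewrite /Tvar tofrac_eq0 mvar_neq0. Qed.

Lemma Tmon_add a b : Tmon K (addE a b) = Tmon K a * Tmon K b.
Proof. rewrite /Tmon -big_split; apply: eq_bigr => x _; exact: expfzDr (Tvar_neq0 x). Qed.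

Lemma Tmon0 : Tmon K (fun _ : option P => 0) = 1.
Proof. by rewrite /Tmon big1 // => x _; rewrite expr0z. Qed.

Lemma Tmon_neq0 (a : E) : Tmon K a != 0.
Proof. rewrite /Tmon prodf_seq_neq0; apply/allP => x _; exact: expfz_neq0 (Tvar_neq0 x). Qed.

Definition ef (n : option P -> nat) : nat -> nat :=
  fun i => if @insub _ (fun i => (i < #|{: option P}|)%N) 'I_#|{: option P}| i is Some o
           then n (enum_val o) else 0%N.

Lemma Tmon_nat (n : option P -> nat) :
  Tmon K (fun x => (n x)%:Z) = @FracField.tofrac (mpoly K m) (mm K m (ef n)).
Proof.
rewrite /Tmon /mm rmorph_prod (reindex (@enum_rank _)) /=; last first.
  by exists enum_val => i _; rewrite ?enum_rankK ?enum_valK.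
apply: eq_bigr => x _; rewrite rmorphXn /ef valK enum_rankK.
done.
Qed.


Lemma eq_big_In (V : nmodType) (T : Type) (s : seq T) (f g : T -> V) :
  (forall p, List.In p s -> f p = g p) -> \sum_(p <- s) f p = \sum_(p <- s) g p.
Proof.
elim: s => [|a s IH] H; first by rewrite !big_nil.
rewrite !big_cons H /=; last by left.
by rewrite IH // => p Hp; apply: H; right.
Qed.

Lemma le_In_sum (T : Type) (s : seq T) (f : T -> nat) p :
  List.In p s -> (f p <= \sum_(q <- s) f q)%N.
Proof.
elim: s => [|a s IH] //= [->|H]; rewrite big_cons; first exact: leq_addr.
exact: leq_trans (IH H) (leq_addl _ _).
Qed.

Lemma le_sum_x (f : option P -> nat) x : (f x <= \sum_y f y)%N.
Proof. by rewrite (bigD1 x) //= leq_addr. Qed.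

Lemma agree_ef (a b : option P -> nat) :
  agree m (ef a) (ef b) = [forall x, a x == b x].
Proof.
apply/forallP/forallP => H x.
  by have := H (enum_rank x); rewrite /ef valK enum_rankK.
by rewrite /ef valK.
Qed.

Lemma lindep s e0 : lsum s = 0 -> coefL s e0 = 0.
Proof.
move=> Hs.
set M := (\sum_(p <- s) \sum_x `|p.2 x|%N + \sum_x `|e0 x|%N)%N.
have hs : forall p, List.In p s -> forall x, (`|p.2 x|%N <= M)%N.
  move=> p Hp x; apply: leq_trans (leq_addr _ _).
  apply: leq_trans (le_In_sum (fun p => \sum_x `|p.2 x|%N) Hp).
  exact: (le_sum_x (fun x => `|p.2 x|%N)).
have h0 : forall x, (`|e0 x|%N <= M)%N.
  move=> x; apply: leq_trans (leq_addl _ _); exact: (le_sum_x (fun x => `|e0 x|%N)).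
pose n (a : E) x := absz (a x + M%:Z).
pose beta : E := fun _ => M%:Z.
have Hn : forall a : E, (forall x, (`|a x|%N <= M)%N) -> addE a beta = (fun x => (n a x)%:Z).
  move=> a Ha; apply: functional_extensionality => x; rewrite /addE /n /beta.
  have := Ha x; lia.
have Hp : \sum_(p <- map (fun p => (p.1, ef (n p.2))) s) mconst m p.1 * mm K m p.2 = 0.
  apply/eqP; rewrite -(tofrac_eq0) rmorph_sum big_map.
  apply/eqP; apply: eq_trans (_ : lsum s * Tmon K beta = 0); last by rewrite Hs mul0r.
  rewrite /lsum mulr_suml; apply: eq_big_In => p Hin /=.
  by rewrite rmorphM -mulrA -Tmon_add (Hn _ (hs _ Hin)) Tmon_nat.
have := poly_indep Hp (ef (n e0)).
rewrite big_map => H; apply: eq_trans H.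
rewrite /coefL big_mkcond [RHS]big_mkcond; apply: eq_big_In => p Hin /=.
rewrite agree_ef; congr (if _ then _ else _); apply: eq_forallb => x.
have := hs _ Hin x; have := h0 x; rewrite /n.
move=> H1 H2; apply/eqP/eqP => [->|] //; lia.
Qed.


Lemma Kc_sum (T : Type) (s : seq T) (f : T -> K) :
  Kc P (\sum_(p <- s) f p) = \sum_(p <- s) Kc P (f p).
Proof.
elim: s => [|a s IH]; first by rewrite !big_nil Kc0.
by rewrite !big_cons KcD IH.
Qed.

Definition negL (p : K * E) : K * E := (- p.1, p.2).

Lemma lsum_cat s t : lsum (s ++ t) = lsum s + lsum t.
Proof. by rewrite /lsum big_cat. Qed.

Lemma lsum_neg t : lsum (map negL t) = - lsum t.
Proof. by rewrite /lsum big_map -sumrN; apply: eq_bigr => p _; rewrite /= KcN mulNr. Qed.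

Lemma coefL_cat s t e : coefL (s ++ t) e = coefL s e + coefL t e.
Proof. by rewrite /coefL big_cat. Qed.

Lemma coefL_neg t e : coefL (map negL t) e = - coefL t e.
Proof. by rewrite /coefL big_map -sumrN. Qed.

Lemma lindep2 s t e : lsum s = lsum t -> coefL s e = coefL t e.
Proof.
move=> H; apply/eqP; rewrite -subr_eq0 -coefL_neg -coefL_cat; apply/eqP/lindep.
by rewrite lsum_cat lsum_neg H subrr.
Qed.

Lemma coefL_support s e : coefL s e != 0 -> exists2 p, List.In p s & p.2 = e.
Proof.
elim: s => [|a s IH]; first by rewrite /coefL big_nil eqxx.
rewrite /coefL big_cons; case: ifP => [He _|_ /IH [p Hp He]].
  by exists a; [left | exact: eqE_eq].
by exists p => //; right.
Qed.

Lemma reduce s : exists s', lsum s' = lsum s /\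
  forall p, List.In p s' -> coefL s p.2 != 0.
Proof.
move: {2}(size s) (leqnn (size s)) => k; elim: k s => [|k IH] [|a r] //= Hk.
- by exists [::].
- by exists [::].
set s := a :: r.
set r1 := [seq p <- s | ~~ eqE p.2 a.2].
have Hsz : (size r1 <= k)%N.
  have Ea : eqE a.2 a.2 by apply/forallP.
  by rewrite /r1 /= Ea /= size_filter; exact: leq_trans (count_size _ _) Hk.
have [r1' [H1 H2]] := IH r1 Hsz.
have Hl : lsum s = Kc P (coefL s a.2) * Tmon K a.2 + lsum r1.
  rewrite /lsum (bigID (fun p : K * E => eqE p.2 a.2)) /= /r1 big_filter; congr (_ + _).
  rewrite /coefL (big_morph (@Kc d P K) KcD Kc0) mulr_suml; apply: eq_bigr => p /eqE_eq ->; done.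
have Hc : forall p, List.In p r1' -> coefL s p.2 != 0.
  move=> p /H2; rewrite /coefL /r1 big_filter_cond.
  case Ep: (eqE p.2 a.2).
    by rewrite big1 ?eqxx // => q; rewrite (eqE_eq Ep); case: (eqE q.2 a.2).
  rewrite (eq_bigl (fun q : K * E => eqE q.2 p.2)) // => q.
  case Eq: (eqE q.2 p.2) => /=; last by rewrite andbF.
  by rewrite (eqE_eq Eq) Ep.
case: (eqVneq (coefL s a.2) 0) => Hz.
  exists r1'; split; first by rewrite H1 Hl Hz Kc0 mul0r add0r.
  exact: Hc.
exists ((coefL s a.2, a.2) :: r1'); split.
  by rewrite Hl -H1 /lsum big_cons.
by move=> p [<-|/Hc].
Qed.

Lemma monspanE (A : E -> Prop) q :
  mspan A q <-> exists s, List.Forall (fun p => A p.2) s /\ q = lsum s.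
Proof. done. Qed.

Lemma span_ind (A : E -> Prop) (Q : F -> Prop) :
  Q 0 -> (forall c e, A e -> Q (Kc P c * Tmon K e)) ->
  (forall x y, Q x -> Q y -> Q (x + y)) -> forall q, mspan A q -> Q q.
Proof.
move=> H0 H1 H2 q [s [Hs ->]]; elim: s Hs => [|a s IH] Hs; first by rewrite big_nil.
inversion Hs; subst; rewrite big_cons; apply: H2; [exact: H1 | exact: IH].
Qed.

Lemma span0 (A : E -> Prop) : mspan A 0.
Proof. by exists [::]; rewrite big_nil. Qed.

Lemma span_add (A : E -> Prop) x y : mspan A x -> mspan A y -> mspan A (x + y).
Proof.
move=> [s [Hs ->]] [t [Ht ->]]; exists (s ++ t); split; last by rewrite big_cat.
by apply/List.Forall_app.
Qed.

Lemma span_mon (A : E -> Prop) c e : A e -> mspan A (Kc P c * Tmon K e).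
Proof. by move=> He; exists [:: (c, e)]; split; [constructor | rewrite big_seq1]. Qed.

Lemma span_mon1 (A : E -> Prop) e : A e -> mspan A (Tmon K e).
Proof. by move=> /(span_mon 1); rewrite Kc1 mul1r. Qed.

Lemma span_mono (A B : E -> Prop) q : (forall e, A e -> B e) -> mspan A q -> mspan B q.
Proof.
move=> H; apply: span_ind; [exact: span0 | move=> c e /H; exact: span_mon | exact: span_add].
Qed.

Definition Aplus (A B : E -> Prop) (e : E) := exists a b, A a /\ B b /\ e = addE a b.

Lemma span_mul (A B : E -> Prop) q r :
  mspan A q -> mspan B r -> mspan (Aplus A B) (q * r).
Proof.
move=> Hq Hr; move: q Hq; apply: span_ind.
- by rewrite mul0r; exact: span0.
- move=> c a Ha; move: r Hr; apply: span_ind.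
  + by rewrite mulr0; exact: span0.
  + move=> c' b Hb; rewrite mulrACA -KcM -Tmon_add; apply: span_mon.
    by exists a, b.
  + by move=> x y Hx Hy; rewrite mulrDr; exact: span_add.
- by move=> x y Hx Hy; rewrite mulrDl; exact: span_add.
Qed.

Lemma span_support (A : E -> Prop) s e :
  mspan A (lsum s) -> coefL s e != 0 -> A e.
Proof.
move=> [t [Ht Heq]]; rewrite (lindep2 e Heq) => /coefL_support [p Hp <-].
by move/List.Forall_forall: Ht; apply.
Qed.

Lemma span_of_coef (A : E -> Prop) s :
  (forall e, coefL s e != 0 -> A e) -> mspan A (lsum s).
Proof.
move=> H; have [s' [<- H2]] := reduce s; exists s'; split => //.
by apply/List.Forall_forall => p /H2 /H.
Qed.


Definition shiftL (a : E) (p : K * E) : K * E := (p.1, addE p.2 a).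

Lemma lsum_shift a s : lsum (map (shiftL a) s) = lsum s * Tmon K a.
Proof.
by rewrite /lsum big_map mulr_suml; apply: eq_bigr => p _; rewrite /= Tmon_add mulrA.
Qed.

Lemma coefL_shift a s e : coefL (map (shiftL a) s) (addE e a) = coefL s e.
Proof.
rewrite /coefL big_map; apply: eq_bigl => p /=; apply: eq_forallb => x.
by rewrite /addE (inj_eq (addIr _)).
Qed.

Definition negE (a : E) : E := fun x => - a x.

Lemma Tmon_negE a : Tmon K a * Tmon K (negE a) = 1.
Proof.
rewrite -Tmon_add -Tmon0; congr Tmon; apply: functional_extensionality => x.
by rewrite /addE /negE subrr.
Qed.

Definition colset (A : E -> Prop) (e : E) := forall a, A a -> Sn 0 (addE e a).

Lemma QRshift (s : seq (K * E)) (b : E) :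
  Sn 0 b -> (forall p, List.In p s -> Sn 0 (addE p.2 b)) -> QR (lsum s).
Proof.
move=> Hb Hs; exists (lsum s * Tmon K b), (Tmon K b); split; last split.
- rewrite -lsum_shift; exists (map (shiftL b) s); split => //.
  apply/List.Forall_forall => p /List.in_map_iff [p' [<- Hp']]; exact: Hs.
- exact: span_mon1.
- by split; [exact: Tmon_neq0 | rewrite mulfK // Tmon_neq0].
Qed.

Lemma L2a (A : E -> Prop) q : (exists a, A a) -> colon (mspan A) q -> mspan (colset A) q.
Proof.
move=> [a0 Ha0] [_ Hq].
have [t [_ Ht]] := Hq _ (span_mon1 Ha0); change (q * Tmon K a0 = lsum t) in Ht.
have Eq : q = lsum (map (shiftL (negE a0)) t).
  by rewrite lsum_shift -Ht -mulrA Tmon_negE mulr1.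
rewrite Eq.
apply: span_of_coef => e He a Ha.
have [u [Hu Hu']] := Hq _ (span_mon1 Ha).
apply: (@span_support (Sn 0) (map (shiftL a) (map (shiftL (negE a0)) t))).
  by rewrite lsum_shift -Eq; exists u.
by rewrite (coefL_shift a).
Qed.

Lemma ideal_prod_span (A B : E -> Prop) q :
  ideal_prod (mspan A) (mspan B) q <-> mspan (Aplus A B) q.
Proof.
split.
  move=> [s [Hs ->]]; elim: s Hs => [|p s IH] Hs; first by rewrite big_nil; exact: span0.
  inversion Hs as [|? ? [H1 H2] Hs']; subst.
  by rewrite big_cons; apply: span_add; [exact: span_mul | exact: IH].
move: q; apply: span_ind.
- by exists [::]; split => //; rewrite big_nil.
- move=> c e [a [b [Ha [Hb ->]]]].
  exists [:: (Kc P c * Tmon K a, Tmon K b)]; split.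
    by constructor => //; split; [exact: span_mon | exact: span_mon1].
  by rewrite big_seq1 Tmon_add mulrA.
- move=> x y [s [Hs ->]] [t [Ht ->]]; exists (s ++ t); split; last by rewrite big_cat.
  by apply/List.Forall_app.
Qed.

End Laurent.

Section Comb.
Variables (d : Order.disp_t) (P : finPOrderType d).
Local Notation E := (option P -> int).

Lemma sum_const_le (C : {set P}) (N : int) : 0 <= N ->
  \sum_(b in C) N <= N * (#|P|)%:R.
Proof.
move=> HN; rewrite sumr_const -mulr_natr; have := max_card (mem C).
move: (#|C|) (#|P|) => k l Hkl; nia.
Qed.

Lemma Sn_add a b (x y : E) : Sn a x -> Sn b y -> Sn (a + b) (addE x y).
Proof.
move=> [Hx1 Hx2] [Hy1 Hy2]; split.
  by move=> z; rewrite /addE; have := Hx1 z; have := Hy1 z; lia.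
move=> C HC; rewrite /addE big_split /=.
by rewrite addrACA; apply: lerD; [exact: Hx2 | exact: Hy2].
Qed.

Lemma Sn_bounded (M : nat) (a : E) : (forall x, (`|a x|%N <= M)%N) ->
  Sn 0 (addE a (fun o => if o is Some _ then M%:Z else M%:Z * 3%:R * (#|P|.+1)%:R)).
Proof.
move=> Ha; split.
  by move=> z; rewrite /addE; have := Ha (Some z); lia.
move=> C _; rewrite /addE addr0.
have H1 : \sum_(b in C) (a (Some b) + M%:Z) <= \sum_(b in C) (2 * M%:Z).
  by apply: ler_sum => b _; have := Ha (Some b); lia.
apply: (le_trans H1); apply: (le_trans (sum_const_le C (_ : 0 <= 2 * M%:Z)) _) => //.
have := Ha None; move: (#|P|) => k; rewrite -[k.+1]addn1 natrD; nia.
Qed.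


Lemma bigbeta (K : fieldType) (s : seq (K * E)) :
  exists b : E, Sn 0 b /\ forall p, List.In p s -> Sn 0 (addE p.2 b).
Proof.
set M := (\sum_(p <- s) \sum_x `|p.2 x|%N)%N.
exists (addE (fun _ => 0) (fun o => if o is Some _ then M%:Z else M%:Z * 3%:R * (#|P|.+1)%:R)).
split; first by apply: Sn_bounded => x.
move=> p Hp.
have -> : addE p.2 (addE (fun _ => 0) (fun o => if o is Some _ then M%:Z else M%:Z * 3%:R * (#|P|.+1)%:R))
   = addE p.2 (fun o => if o is Some _ then M%:Z else M%:Z * 3%:R * (#|P|.+1)%:R).
  by apply: functional_extensionality => x; rewrite /addE add0r.
apply: Sn_bounded => x.
apply: leq_trans (le_In_sum (fun p => \sum_x `|p.2 x|%N) Hp).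
exact: (le_sum_x (fun x => `|p.2 x|%N)).
Qed.

Lemma Sn_nonempty c : exists x : E, Sn c x.
Proof.
pose N := (absz c)%:Z.
exists (fun o => if o is Some _ then N else N * (#|P|.+1)%:R); split.
  by move=> y /=; rewrite /N; lia.
move=> C _ /=.
have H := sum_const_le C (_ : 0 <= N).
have := H ltac:(rewrite /N; lia).
rewrite /N; move: (#|P|) => k; rewrite -[k.+1]addn1 natrD; set S := (\sum_(b in C) _); clearbody S; nia.
Qed.

Lemma witness_x c (x : P) : exists xi : E, Sn c xi /\ xi (Some x) = c.
Proof.
pose N := (absz c)%:Z.
exists (fun o => if o is Some y then (if y == x then c else N) else N * (#|P|.+1)%:R).
rewrite eqxx; split => //; split.
  by move=> y /=; case: eqP => _; rewrite /N; lia.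
move=> C _ /=.
have H1 : \sum_(b in C) (if b == x then c else N) <= \sum_(b in C) N.
  by apply: ler_sum => b _; case: eqP => _; rewrite /N; lia.
have := le_trans H1 (sum_const_le C (N := N) ltac:(rewrite /N; lia)).
rewrite /N; move: (#|P|) => k; rewrite -[k.+1]addn1 natrD; set S := (\sum_(b in C) _); clearbody S; nia.
Qed.

Lemma sum_sub_all (C : {set P}) (g : P -> int) : (forall b, 0 <= g b) ->
  \sum_(b in C) g b <= \sum_b g b.
Proof.
move=> Hg; rewrite [X in _ <= X](bigID (fun b => b \in C)) /= lerDl.
by apply: sumr_ge0 => b _.
Qed.

Lemma witness_C c (C : {set P}) : is_maximal_chain C ->
  exists xi : E, Sn c xi /\ xi None - \sum_(b in C) xi (Some b) = c.
Proof.
move=> [HC HCmax].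
pose N := (absz c)%:Z.
pose a := N * (#|P|.+1)%:R.
have HN : 0 <= N by rewrite /N.
have Ha : N * (#|P|)%:R + N <= a by rewrite /a -[_.+1]addn1 natrD mulrDr mulr1.
have HNa : N <= a by apply: le_trans Ha; rewrite lerDr mulr_ge0.
have HcN : c <= N by rewrite /N; lia.
exists (fun o => if o is Some y then (if y \in C then a else N) else a * (#|C|)%:R + c).
have HsC : \sum_(b in C) (if b \in C then a else N) = a * (#|C|)%:R.
  rewrite (eq_bigr (fun _ => a)); last by move=> b ->.
  by rewrite sumr_const mulr_natr.
split; last by rewrite HsC addrAC subrr add0r.
split.
  by move=> y /=; case: (y \in C) => //; apply: le_trans HNa.
move=> C' [HC' _] /=; rewrite lerD2r.
case: (boolP (C \subset C')) => sub.
  by rewrite (HCmax C' HC' sub) HsC.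
have [y0 y0C y0nC'] : exists2 y0, y0 \in C & y0 \notin C'.
  by move/subsetPn: sub => [y0 ? ?]; exists y0.
pose g b := (if b \in C :\ y0 then a else 0) + N.
have Hg : forall b, 0 <= g b.
  by move=> b; rewrite /g; case: ifP => _; rewrite ?add0r //; apply: addr_ge0 => //; apply: le_trans HNa.
apply: (le_trans (_ : _ <= \sum_(b in C') g b)).
  apply: ler_sum => b bC'; rewrite /g in_setD1.
  have -> : (b != y0) by apply: contraNneq y0nC' => <-.
  case: (b \in C) => /=; first by rewrite lerDl.
  by rewrite add0r.
apply: (le_trans (sum_sub_all C' Hg)).
have E1 : \sum_i (if i \in C :\ y0 then a else 0) = a * #|C :\ y0|%:R.
  by rewrite mulr_natr -sumr_const [RHS]big_mkcond.
rewrite /g big_split /= E1 sumr_const -mulr_natr mul1r.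
have -> : #|C| = (#|C :\ y0|).+1 by rewrite (cardsD1 y0 C) y0C.
rewrite -addn1 natrD mulrDr mulr1 lerD2l.
by apply: le_trans Ha; rewrite mulr_natr lerDl.
Qed.

End Comb.

Section Main.
Variables (d : Order.disp_t) (P : finPOrderType d) (K : fieldType).
Local Notation E := (option P -> int).
Local Notation F := (Fld P K).
Local Notation mspan := (@monspan d P K).

Definition Wit (A : E -> Prop) (c : int) :=
  [/\ forall a, A a -> Sn c a,
      forall x : P, exists a, A a /\ a (Some x) = c,
      forall C : {set P}, is_maximal_chain C ->
        exists a, A a /\ a None - \sum_(b in C) a (Some b) = c
    & exists a, A a].

Lemma colset_char (A : E -> Prop) c : Wit A c -> forall e, colset A e <-> Sn (- c) e.
Proof.
move=> [HA W1 W2 _] e; split.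
  move=> He; split.
    move=> x; have [a [Ha Hax]] := W1 x; have [H1 _] := He a Ha.
    by have := H1 x; rewrite /addE Hax; lia.
  move=> C HC; have [a [Ha HaC]] := W2 C HC; have [_ H2] := He a Ha.
  have := H2 C HC; rewrite /addE big_split /= addr0 => H.
  move: H HaC; set s1 := (\sum_(b in C) e (Some b)); set s2 := (\sum_(b in C) a (Some b)).
  clearbody s1 s2; lia.
move=> He a Ha; have := Sn_add He (HA a Ha); by rewrite addNr.
Qed.

Lemma Wit_Sn c : Wit (Sn c) c.
Proof.
split => //; [exact: witness_x | exact: witness_C | exact: (Sn_nonempty P)].
Qed.

Lemma Wit_plus a b : Wit (Aplus (Sn a) (Sn b)) (a + b).
Proof.
split.
- by move=> e [x [y [Hx [Hy ->]]]]; exact: Sn_add.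
- move=> x; have [u [Hu Hux]] := witness_x a x; have [v [Hv Hvx]] := witness_x b x.
  by exists (addE u v); split; [exists u, v | rewrite /addE Hux Hvx].
- move=> C HC; have [u [Hu HuC]] := witness_C a HC; have [v [Hv HvC]] := witness_C b HC.
  exists (addE u v); split; first by exists u, v.
  by rewrite /addE big_split /= opprD addrACA HuC HvC.
- have [u Hu] := Sn_nonempty P a; have [v Hv] := Sn_nonempty P b.
  by exists (addE u v), u, v.
Qed.

Lemma span_ext (A B : E -> Prop) : (forall e, A e <-> B e) -> forall q, mspan A q <-> mspan B q.
Proof. by move=> H q; split; apply: span_mono => e /H. Qed.

Lemma colon_ext (I J : F -> Prop) : (forall q, I q <-> J q) -> forall q, colon I q <-> colon J q.
Proof. by move=> H q; split => -[HQ Hq]; split => // a /H; exact: Hq. Qed.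

Lemma ideal_prod_ext (I I' J J' : F -> Prop) : (forall q, I q <-> I' q) -> (forall q, J q <-> J' q) ->
  forall q, ideal_prod I J q <-> ideal_prod I' J' q.
Proof.
move=> HI HJ q; split => -[s [Hs ->]]; exists s; split => //; move: Hs; apply: List.Forall_impl;
  by move=> p [/HI ? /HJ ?].
Qed.

Lemma L2 (A : E -> Prop) : (exists a, A a) -> forall q, colon (mspan A) q <-> mspan (colset A) q.
Proof.
move=> HA q; split; first exact: L2a.
move=> Hq; split.
  move: Hq => [s [Hs ->]]; have [b [Hb Hsb]] := bigbeta s; exact: (QRshift Hb Hsb).
move=> r Hr; apply: span_mono (span_mul Hq Hr) => e [x [y [Hx [Hy ->]]]]; exact: Hx.
Qed.

Lemma colon_Sn (A : E -> Prop) c : Wit A c -> forall q, colon (mspan A) q <-> mspan (Sn (- c)) q.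
Proof.
move=> W q; have [_ _ _ HA] := W.
rewrite L2 //; apply: span_ext; exact: colset_char.
Qed.

Lemma div_prod_Sn a b : forall q,
  div_prod (mspan (Sn a)) (mspan (Sn b)) q <-> mspan (Sn (a + b)) q.
Proof.
move=> q; rewrite /div_prod.
have H1 : forall q, colon (ideal_prod (mspan (Sn a)) (mspan (Sn b))) q <-> mspan (Sn (- (a + b))) q.
  move=> q'; rewrite -colon_Sn; last exact: Wit_plus.
  by apply: colon_ext => q''; exact: ideal_prod_span.
by rewrite (colon_ext H1) (colon_Sn (Wit_Sn (-(a+b)))) opprK.
Qed.

Lemma div_prod_ext (I I' J J' : F -> Prop) : (forall q, I q <-> I' q) -> (forall q, J q <-> J' q) ->
  forall q, div_prod I J q <-> div_prod I' J' q.
Proof.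
move=> HI HJ q; rewrite /div_prod; apply: colon_ext; apply: colon_ext; exact: ideal_prod_ext.
Qed.

Lemma omega_npowE k : forall q, omega_npow (K := K) (P := P) k q <-> mspan (Sn k%:Z) q.
Proof.
elim: k => [|k IH] q //=.
rewrite (div_prod_ext (I' := mspan (Sn 1)) _ IH) //.
by rewrite div_prod_Sn -[k.+1]add1n PoszD.
Qed.

Lemma omega_invE : forall q, omega_inv (K := K) (P := P) q <-> mspan (Sn (-1)) q.
Proof. by move=> q; rewrite /omega_inv (colon_Sn (Wit_Sn 1)). Qed.

Lemma omega_inv_npowE k : forall q, omega_inv_npow (K := K) (P := P) k q <-> mspan (Sn (- k%:Z)) q.
Proof.
elim: k => [|k IH] q /=; first by rewrite oppr0.
rewrite (div_prod_ext omega_invE IH) div_prod_Sn -opprD -[k.+1]add1n PoszD //.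
Qed.

Lemma omega_powE n : forall q, omega_pow (K := K) (P := P) n q <-> mspan (Sn n) q.
case: n => k q; first exact: omega_npowE.
change (omega_inv_npow (K := K) (P := P) k.+1 q <-> mspan (Sn (Negz k)) q).
by rewrite (omega_inv_npowE k.+1) NegzE.
Qed.

End Main.

Theorem mainTheorem2 (d : Order.disp_t) (P : finPOrderType d) (K : fieldType) (n : int) :
  (forall xi : option P -> int,
     @omega_pow d P K n (@Tmon d P K xi) <-> @Sn d P n xi) /\
  (forall q : Fld P K,
     @omega_pow d P K n q <-> @monspan d P K (@Sn d P n) q).
Proof.
split; last exact: omega_powE.
move=> xi; rewrite omega_powE; split; last exact: span_mon1.
have -> : Tmon K xi = lsum [:: (1, xi)] by rewrite /lsum big_seq1 Kc1 mul1r.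
move/span_support; apply.
rewrite /coefL big_cons big_nil /=.
have -> : eqE xi xi by apply/forallP.
by rewrite addr0 oner_neq0.
Qed.
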